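(* Let $p_0,q\in\mathcal S^{d-1}$ and consider the preference dynamics with the fixed recommendation $q_t=q$ for all $t\ge 0$, i.e. $\tilde p_{t+1}=p_t+\eta_t\,(p_t^\top q)\,q$, $p_{t+1}=\tilde p_{t+1}/\|\tilde p_{t+1}\|_2$, with step sizes either constant ($\eta_t=\eta$) or decreasing ($\eta_t=\frac{\eta}{t+s}$). Then for all $t\ge 0$, \[p_t=\left(\frac{\gamma_t}{\sqrt{(q^\top p_0)^2+\gamma_t^2(1-(q^\top p_0)^2)}}\right)p_0+\left(\frac{q^\top p_0\,(1-\gamma_t)}{\sqrt{(q^\top p_0)^2+\gamma_t^2(1-(q^\top p_0)^2)}}\right)q,\] where $\gamma_t=(\eta+1)^{-t}$ in the constant case and $\gamma_t=\prod_{k=0}^{\eta-1}\frac{s+k}{t+s+k}$ in the decreasing case. Moreover, the magnitude of the coefficient of $p_0$ is nonincreasing in $t$ and the magnitude of the coefficient of $q$ is nondecreasing in $t$.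
   Context: $\mathcal S^{d-1}$ denotes the unit sphere in $\mathbb{R}^d$. In the constant step-size setting $\eta>0$ is a constant; in the decreasing step-size setting $\eta$ and $s$ are positive integers. *)

(* Defs.v *)
From mathcomp Require Import all_boot all_order all_algebra.
Set Implicit Arguments. Unset Strict Implicit. Unset Printing Implicit Defensive.
Import Order.TTheory GRing.Theory Num.Theory.
Local Open Scope ring_scope.

Section PrefDyn.
Variables (R : rcfType) (d : nat).

Definition dotv (u v : 'rV[R]_d) : R := \sum_(i < d) u 0 i * v 0 i.
Definition norm2 (u : 'rV[R]_d) : R := Num.sqrt (dotv u u).

Definition on_sphere (u : 'rV[R]_d) : Prop := norm2 u = 1.

Definition pref_step (eta : R) (q p : 'rV[R]_d) : 'rV[R]_d :=
  let pt := p + (eta * dotv p q) *: q in (norm2 pt)^-1 *: pt.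

Fixpoint pref_traj (etas : nat -> R) (q p0 : 'rV[R]_d) (t : nat) : 'rV[R]_d :=
  match t with
  | O => p0
  | t'.+1 => pref_step (etas t') q (pref_traj etas q p0 t')
  end.

(* coefficients of p0 and q in the closed form, given gamma_t and c = q^T p0 *)
Definition denom (c g : R) : R := Num.sqrt (c ^+ 2 + g ^+ 2 * (1 - c ^+ 2)).
Definition coef_p0 (c g : R) : R := g / denom c g.
Definition coef_q (c g : R) : R := c * (1 - g) / denom c g.
End PrefDyn.

Definition gamma_const (R : rcfType) (eta : R) (t : nat) : R := (eta + 1) ^- t.

Definition gamma_dec (R : rcfType) (eta s t : nat) : R :=
  \prod_(k < eta) ((s + k)%:R / (t + s + k)%:R).

Definition eta_dec (R : rcfType) (eta s t : nat) : R := eta%:R / (t + s)%:R.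

(* Main.v *)
Require Import Defs.
From mathcomp Require Import all_boot all_order all_algebra.
From mathcomp Require Import ring lra zify.
Set Implicit Arguments. Unset Strict Implicit. Unset Printing Implicit Defensive.
Import Order.TTheory GRing.Theory Num.Theory.
Local Open Scope ring_scope.

Lemma dotvC (R : rcfType) d (u v : 'rV[R]_d) : dotv u v = dotv v u.
Proof. by rewrite /dotv; apply: eq_bigr => i _; rewrite mulrC. Qed.

Lemma dotvDZl (R : rcfType) d (a b : R) (u v w : 'rV[R]_d) :
  dotv (a *: u + b *: v) w = a * dotv u w + b * dotv v w.
Proof.
rewrite /dotv !mulr_sumr -big_split; apply: eq_bigr => i _.
rewrite !mxE /=; by rewrite mulrDl !mulrA.
Qed.

Lemma dotv_ge0 (R : rcfType) d (u : 'rV[R]_d) : 0 <= dotv u u.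
Proof. by rewrite /dotv; apply: sumr_ge0 => i _; rewrite -expr2 sqr_ge0. Qed.

Lemma sphere1 (R : rcfType) d (u : 'rV[R]_d) : on_sphere u -> dotv u u = 1.
Proof.
rewrite /on_sphere /norm2 => H.
by rewrite -(sqr_sqrtr (dotv_ge0 u)) H expr1n.
Qed.

Definition nrmz (R : rcfType) d (v : 'rV[R]_d) := (norm2 v)^-1 *: v.

Lemma dotvZZ (R : rcfType) d (k : R) (u v : 'rV[R]_d) :
  dotv (k *: u) (k *: v) = k ^+ 2 * dotv u v.
Proof.
rewrite /dotv mulr_sumr; apply: eq_bigr => i _; rewrite !mxE /=.
by rewrite expr2 -!mulrA; congr (_ * _); rewrite mulrCA.
Qed.

Lemma norm2Z (R : rcfType) d (k : R) (v : 'rV[R]_d) : norm2 (k *: v) = `|k| * norm2 v.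
Proof.
by rewrite /norm2 dotvZZ sqrtrM ?sqr_ge0 // sqrtr_sqr.
Qed.

Lemma nrmzZ (R : rcfType) d (k : R) (v : 'rV[R]_d) : 0 < k -> nrmz (k *: v) = nrmz v.
Proof.
move=> k0; rewrite /nrmz norm2Z gtr0_norm // invfM scalerA.
by rewrite mulrAC mulVf ?gt_eqF // mul1r.
Qed.

Lemma cs (R : rcfType) d (p q : 'rV[R]_d) : on_sphere p -> on_sphere q ->
  dotv q p ^+ 2 <= 1.
Proof.
move=> hp hq; set c := dotv q p.
have := dotv_ge0 (1 *: p + (- c) *: q).
rewrite dotvDZl !(dotvC _ (_ + _)) !dotvDZl (sphere1 hp) (sphere1 hq).
rewrite -/c (dotvC p q) -/c => h. nra.
Qed.

Lemma dotvZl (R : rcfType) d (k : R) (u w : 'rV[R]_d) :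
  dotv (k *: u) w = k * dotv u w.
Proof.
by rewrite /dotv mulr_sumr; apply: eq_bigr => i _; rewrite !mxE /= mulrA.
Qed.

Definition uv (R : rcfType) d (p0 q : 'rV[R]_d) (g : R) :=
  g *: p0 + (dotv q p0 * (1 - g)) *: q.

Lemma dot_u (R : rcfType) d (p0 q : 'rV[R]_d) g : on_sphere p0 -> on_sphere q ->
  dotv (uv p0 q g) (uv p0 q g) = dotv q p0 ^+ 2 + g ^+ 2 * (1 - dotv q p0 ^+ 2).
Proof.
move=> hp hq; rewrite /uv dotvDZl !(dotvC _ (_ + _)) !dotvDZl (sphere1 hp) (sphere1 hq).
rewrite (dotvC p0 q); ring.
Qed.

Lemma dot_uq (R : rcfType) d (p0 q : 'rV[R]_d) g : on_sphere q ->
  dotv (uv p0 q g) q = dotv q p0.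
Proof.
move=> hq; rewrite /uv dotvDZl (sphere1 hq) (dotvC p0 q); ring.
Qed.

Lemma nrmz_u (R : rcfType) d (p0 q : 'rV[R]_d) g : on_sphere p0 -> on_sphere q ->
  nrmz (uv p0 q g) = coef_p0 (dotv q p0) g *: p0 + coef_q (dotv q p0) g *: q.
Proof.
move=> hp hq; rewrite /nrmz {1}/norm2 dot_u // -/(denom _ _).
by rewrite /uv scalerDr !scalerA /coef_p0 /coef_q !(mulrC (denom _ _)^-1).
Qed.

Lemma norm2_u_gt0 (R : rcfType) d (p0 q : 'rV[R]_d) g : on_sphere p0 -> on_sphere q ->
  0 < g -> 0 < norm2 (uv p0 q g).
Proof.
move=> hp hq g0; rewrite /norm2 dot_u // sqrtr_gt0.
have := cs hp hq; set c := dotv q p0 => h.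
have c0 : 0 <= c ^+ 2 by apply: sqr_ge0.
have g2 : 0 < g ^+ 2 by apply: exprn_gt0.
case: (lerP (g ^+ 2) 1) => hg1.
  have : 0 <= c ^+ 2 * (1 - g ^+ 2) by apply: mulr_ge0; lra.
  lra.
have : 0 <= (g ^+ 2 - 1) * (1 - c ^+ 2) by apply: mulr_ge0; lra.
lra.
Qed.

Lemma step_u (R : rcfType) d (p0 q : 'rV[R]_d) (eta g g' : R) :
  on_sphere p0 -> on_sphere q -> 0 < 1 + eta -> 0 < g -> g' * (1 + eta) = g ->
  pref_step eta q (nrmz (uv p0 q g)) = nrmz (uv p0 q g').
Proof.
move=> hp hq he g0 hg.
have n0 := norm2_u_gt0 hp hq g0.
rewrite /pref_step -/(nrmz _) /nrmz dotvZl dot_uq // -/(nrmz _).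
set k := (norm2 (uv p0 q g))^-1.
have -> : k *: uv p0 q g + (eta * (k * dotv q p0)) *: q
   = k *: ((1 + eta) *: uv p0 q g').
  rewrite /uv !scalerDr !scalerA -addrA -scalerDl.
  congr (_ *: _ + _ *: _); [by rewrite -hg; ring | by rewrite -hg; ring].
rewrite (nrmzZ _ (_ : 0 < k)); last by rewrite invr_gt0.
by rewrite (nrmzZ _ he).
Qed.

Lemma traj_gen (R : rcfType) d (p0 q : 'rV[R]_d) (etas : nat -> R) (g : nat -> R) :
  on_sphere p0 -> on_sphere q -> (forall t, 0 < 1 + etas t) -> g 0%N = 1 ->
  (forall t, g t.+1 * (1 + etas t) = g t) ->
  forall t, pref_traj etas q p0 t = nrmz (uv p0 q (g t)) /\ 0 < g t.
Proof.
move=> hp hq he g0 hg; elim=> [|t [IH gt]] /=.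
  rewrite g0 /uv subrr mulr0 scale0r addr0 scale1r /nrmz hp invr1 scale1r.
  by split.
split; first by rewrite IH (step_u hp hq (he t) gt (hg t)).
have := hg t; have := he t => h1 h2.
rewrite -h2 in gt; by rewrite pmulr_lgt0 in gt.
Qed.

Lemma mono (R : rcfType) (c g g' : R) : c ^+ 2 <= 1 -> 0 < g' -> g' <= g -> g <= 1 ->
  `|coef_p0 c g'| <= `|coef_p0 c g| /\ `|coef_q c g| <= `|coef_q c g'|.
Proof.
move=> hc g'0 hgg hg1.
have hsq : forall x : R, `|x| ^+ 2 = x ^+ 2 := fun x => real_normK (num_real x).
have c0 : 0 <= c ^+ 2 by apply: sqr_ge0.
have Xpos : forall h : R, 0 < h -> 0 < c ^+ 2 + h ^+ 2 * (1 - c ^+ 2).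
  move=> h h0; have h2 : 0 < h ^+ 2 by apply: exprn_gt0.
  case: (lerP (h ^+ 2) 1) => hg1'.
    have : 0 <= c ^+ 2 * (1 - h ^+ 2) by apply: mulr_ge0; lra.
    lra.
  have : 0 <= (h ^+ 2 - 1) * (1 - c ^+ 2) by apply: mulr_ge0; lra.
  lra.
have X0 := Xpos g (lt_le_trans g'0 hgg).
have X1 := Xpos g' g'0.
set X := c ^+ 2 + g ^+ 2 * (1 - c ^+ 2) in X0.
set X' := c ^+ 2 + g' ^+ 2 * (1 - c ^+ 2) in X1.
split; rewrite -ler_sqr ?nnegrE ?normr_ge0 // !hsq /coef_p0 /coef_q !expr_div_n /denom
  !sqr_sqrtr ?(ltW X0) ?(ltW X1) // -/X -/X' ler_pdivrMr // mulrAC ler_pdivlMr //.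
  have h1 : 0 <= (g ^+ 2 - g' ^+ 2) * c ^+ 2.
    apply: mulr_ge0 => //; have : 0 <= (g - g') * (g + g') by apply: mulr_ge0; lra.
    lra.
  rewrite -subr_ge0.
  have -> : g ^+ 2 * X' - g' ^+ 2 * X = (g ^+ 2 - g' ^+ 2) * c ^+ 2 by rewrite /X /X'; ring.
  done.
have hb : 0 <= 1 - c ^+ 2 by lra.
have P1 : 0 <= c ^+ 2 * (c ^+ 2 * ((1 - g') ^+ 2 - (1 - g) ^+ 2)).
  apply: mulr_ge0 => //; apply: mulr_ge0 => //.
  have : 0 <= (g - g') * ((1 - g') + (1 - g)) by apply: mulr_ge0; lra.
  have -> : (1 - g') ^+ 2 - (1 - g) ^+ 2 = (g - g') * ((1 - g') + (1 - g)) by ring.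
  done.
have P2 : 0 <= c ^+ 2 * ((1 - c ^+ 2) * ((g - g') * ((1 - g') * g + (1 - g) * g'))).
  apply: mulr_ge0 => //; apply: mulr_ge0 => //; apply: mulr_ge0; first lra.
  apply: addr_ge0; apply: mulr_ge0; lra.
rewrite -subr_ge0.
have -> : (c * (1 - g')) ^+ 2 * X - (c * (1 - g)) ^+ 2 * X' =
  c ^+ 2 * (c ^+ 2 * ((1 - g') ^+ 2 - (1 - g) ^+ 2)) +
  c ^+ 2 * ((1 - c ^+ 2) * ((g - g') * ((1 - g') * g + (1 - g) * g'))) by rewrite /X /X'; ring.
by apply: addr_ge0.
Qed.

Lemma gen_mono (R : rcfType) (etas g : nat -> R) : (forall t, 0 <= etas t) ->
  g 0%N = 1 -> (forall t, g t.+1 * (1 + etas t) = g t) -> (forall t, 0 < g t) ->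
  forall t, g t.+1 <= g t /\ g t <= 1.
Proof.
move=> he g0 hr gp.
have dec : forall t, g t.+1 <= g t.
  move=> t; rewrite -[X in _ <= X](hr t) mulrDr mulr1 lerDl; apply: mulr_ge0 => //.
  exact: ltW.
move=> t; split => //; elim: t => [|t IH]; first by rewrite g0.
exact: le_trans (dec t) IH.
Qed.

Lemma gconst_rec (R : rcfType) (eta : R) (t : nat) : 0 < eta ->
  gamma_const eta t.+1 * (1 + eta) = gamma_const eta t.
Proof.
move=> he; rewrite /gamma_const exprSr invfM addrC -mulrA mulVf ?mulr1 //.
apply: lt0r_neq0; lra.
Qed.

Lemma gdec_rec (R : rcfType) (eta s t : nat) : (0 < s)%N ->
  gamma_dec R eta s t.+1 * (t + s + eta)%:R = gamma_dec R eta s t * (t + s)%:R.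
Proof.
move=> s0; elim: eta => [|n IH].
  by rewrite /gamma_dec !big_ord0 addn0.
rewrite /gamma_dec !big_ord_recr /= -!/(gamma_dec R n s _).
have ne : forall m : nat, (0 < m)%N -> (m%:R : R) != 0.
  by move=> m m0; rewrite pnatr_eq0 -lt0n.
have n1 : (t + s + n)%:R != 0 :> R by apply: ne; lia.
have n2 : (t.+1 + s + n)%:R != 0 :> R by apply: ne; lia.
have n3 : (t + s + n.+1)%:R != 0 :> R by apply: ne; lia.
have e : gamma_dec R n s t.+1 = gamma_dec R n s t * (t + s)%:R / (t + s + n)%:R.
  by rewrite -IH mulfK.
rewrite e.
have -> : (t.+1 + s + n)%:R = (t + s + n.+1)%:R :> R by congr (_%:R); rewrite addnS !addSn.
field; move: n1 n3; rewrite -(addn1 n) !natrD => a b; by rewrite a (addrC 1) b.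
Qed.

Lemma gdec0 (R : rcfType) (eta s : nat) : (0 < s)%N -> gamma_dec R eta s 0 = 1.
Proof.
move=> s0; rewrite /gamma_dec big1 // => i _; rewrite add0n divff //.
by rewrite pnatr_eq0 -lt0n addn_gt0 s0.
Qed.

Lemma gdec_rec2 (R : rcfType) (eta s t : nat) : (0 < s)%N ->
  gamma_dec R eta s t.+1 * (1 + eta_dec R eta s t) = gamma_dec R eta s t.
Proof.
move=> s0.
have ne : (t + s)%:R != 0 :> R by rewrite pnatr_eq0 -lt0n addn_gt0 s0 orbT.
have -> : 1 + eta_dec R eta s t = (t + s + eta)%:R / (t + s)%:R.
  by rewrite /eta_dec natrD; field; rewrite -natrD.
by rewrite mulrA gdec_rec // mulfK.
Qed.

Lemma finish (R : rcfType) d (p0 q : 'rV[R]_d) (etas g : nat -> R) :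
  on_sphere p0 -> on_sphere q -> (forall t, 0 <= etas t) -> g 0%N = 1 ->
  (forall t, g t.+1 * (1 + etas t) = g t) ->
  (forall t : nat,
        pref_traj etas q p0 t
        = coef_p0 (dotv q p0) (g t) *: p0 + coef_q (dotv q p0) (g t) *: q) /\
     (forall t : nat,
        `|coef_p0 (dotv q p0) (g t.+1)| <= `|coef_p0 (dotv q p0) (g t)| /\
        `|coef_q (dotv q p0) (g t)| <= `|coef_q (dotv q p0) (g t.+1)|).
Proof.
move=> hp hq he g0 hr.
have he' : forall t, 0 < 1 + etas t by move=> t; have := he t; lra.
have T := traj_gen hp hq he' g0 hr.
have gp : forall t, 0 < g t by move=> t; exact: (T t).2.
have M := gen_mono he g0 hr gp.
split; first by move=> t; rewrite (T t).1 nrmz_u.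
move=> t; apply: mono; [exact: cs hp hq | exact: gp | exact: (M t).1 | exact: (M t).2].
Qed.

Theorem corollary1 (R : rcfType) (d : nat) (p0 q : 'rV[R]_d) :
  on_sphere p0 -> on_sphere q ->
  (* constant step size eta_t = eta > 0 *)
  (forall eta : R, 0 < eta ->
     let c := dotv q p0 in
     let g := gamma_const eta in
     (forall t : nat,
        pref_traj (fun _ => eta) q p0 t
        = coef_p0 c (g t) *: p0 + coef_q c (g t) *: q) /\
     (forall t : nat,
        `|coef_p0 c (g t.+1)| <= `|coef_p0 c (g t)| /\
        `|coef_q c (g t)| <= `|coef_q c (g t.+1)|)) /\
  (* decreasing step size eta_t = eta / (t + s), eta, s positive integers *)
  (forall eta s : nat, (0 < eta)%N -> (0 < s)%N ->
     let c := dotv q p0 in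
     let g := gamma_dec R eta s in
     (forall t : nat,
        pref_traj (eta_dec R eta s) q p0 t
        = coef_p0 c (g t) *: p0 + coef_q c (g t) *: q) /\
     (forall t : nat,
        `|coef_p0 c (g t.+1)| <= `|coef_p0 c (g t)| /\
        `|coef_q c (g t)| <= `|coef_q c (g t.+1)|)).
Proof.
move=> hp hq; split.
  move=> eta heta; cbv zeta; apply: finish => //.
  - by move=> _; exact: ltW.
  - by rewrite /gamma_const expr0 invr1.
  - by move=> t; exact: gconst_rec.
move=> eta s e0 s0; cbv zeta; apply: finish => //.
- by move=> t; rewrite /eta_dec divr_ge0 ?ler0n.
- exact: gdec0.
- by move=> t; exact: gdec_rec2.
Qed.
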